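(* Let $2\le n\le m$ be natural numbers and $\triangle\subset\Diamond_m$ an $n$-simplex with $0$ in the relative interior of $\triangle$. Then there is a smooth perturbation $\{g_t\}_{t\in(-1,1)}\subset\operatorname{Hom}(\triangle,\Diamond_m)$ of the identity embedding $g_0:\triangle\to\Diamond_m$ such that $0$ lies in the relative interior of $g_t(\triangle)$ for all $t\in(-1,1)$.
   Context: For convex polytopes $P,Q$, $\operatorname{Hom}(P,Q)$ is the set of maps $P\to Q$ that are restrictions of affine maps $\operatorname{Aff}(P)\to\operatorname{Aff}(Q)$, and $\operatorname{Aff}(P,Q)$ is the real affine space of all affine maps $\operatorname{Aff}(P)\to\operatorname{Aff}(Q)$. A smooth perturbation of $f\in\operatorname{Hom}(P,Q)$ is a family $\{f_t\}_{t\in(-1,1)}\subset\operatorname{Hom}(P,Q)$ with $f_0=f$ such that the map $\psi:(-1,1)\to\operatorname{Aff}(P,Q)$ determined by $\psi(t)|_P=f_t$ is injective and smooth. $\Diamond_m=\operatorname{conv}(\pm e_1,\ldots,\pm e_m)\subset\mathbb{R}^m$. *)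

(* Defs.v *)
From HB Require Import structures.
From mathcomp Require Import all_boot all_order all_algebra.
From mathcomp Require Import all_classical all_reals all_analysis.
Set Implicit Arguments. Unset Strict Implicit. Unset Printing Implicit Defensive.
Import Order.TTheory GRing.Theory Num.Theory.
Local Open Scope classical_set_scope.
Local Open Scope ring_scope.

Section Defs.
Variable R : realType.

Definition conv m (S : set 'rV[R]_m) : set 'rV[R]_m :=
  [set x | exists (k : nat) (l : 'I_k -> R) (p : 'I_k -> 'rV[R]_m),
     (forall i, 0 <= l i) /\ \sum_(i < k) l i = 1 /\ (forall i, S (p i)) /\
     x = \sum_(i < k) l i *: p i].

Definition affhull m (S : set 'rV[R]_m) : set 'rV[R]_m :=
  [set x | exists (k : nat) (l : 'I_k -> R) (p : 'I_k -> 'rV[R]_m),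
     \sum_(i < k) l i = 1 /\ (forall i, S (p i)) /\
     x = \sum_(i < k) l i *: p i].

Definition relint m (S : set 'rV[R]_m) : set 'rV[R]_m :=
  [set x | S x /\ exists e : R, 0 < e /\
     (forall y : 'rV[R]_m, (forall j, `|y 0 j - x 0 j| < e) -> affhull S y -> S y)].

Definition stdbasis m (i : 'I_m) : 'rV[R]_m := delta_mx 0 i.

Definition crosspolytope m : set 'rV[R]_m :=
  conv [set x | exists i : 'I_m, x = stdbasis i \/ x = - stdbasis i].

Definition aff_indep m n (v : 'I_n.+1 -> 'rV[R]_m) : Prop :=
  forall l : 'I_n.+1 -> R, \sum_(i < n.+1) l i = 0 ->
    \sum_(i < n.+1) l i *: v i = 0 -> forall i, l i = 0.

Definition is_simplex m n (T : set 'rV[R]_m) : Prop :=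
  exists v : 'I_n.+1 -> 'rV[R]_m, aff_indep v /\ T = conv (range v).

Definition in_m11 (t : R) : Prop := -1 < t /\ t < 1.

Definition smooth_m11 (f : R -> R) : Prop :=
  forall (k : nat) (t : R), in_m11 t -> derivable (derive1n k f) t 1.

Definition affmap m (A : 'M[R]_m) (b : 'rV[R]_m) (x : 'rV[R]_m) : 'rV[R]_m :=
  x *m A + b.

End Defs.
Arguments crosspolytope {R} m.

(* Main.v *)
Require Import Defs.
From HB Require Import structures.
From mathcomp Require Import all_boot all_order all_algebra.
From mathcomp Require Import all_classical all_reals all_analysis.
From mathcomp Require Import lra ring zify.
Import Order.TTheory GRing.Theory Num.Theory.
Local Open Scope classical_set_scope.
Local Open Scope ring_scope.

Lemma conv_convex (R : realType) m (S : set 'rV[R]_m) x y (c : R) :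
  Defs.conv S x -> Defs.conv S y -> 0 <= c -> c <= 1 -> Defs.conv S (c *: x + (1 - c) *: y).
Proof.
move=> [k1 [l1 [p1 [l1p [l1s [p1S ->]]]]]] [k2 [l2 [p2 [l2p [l2s [p2S ->]]]]]] c0 c1.
have hl : forall i, fintype.split (lshift k2 i) = inl i := fun i => unsplitK (inl i).
have hr : forall i, fintype.split (rshift k1 i) = inr i := fun i => unsplitK (inr i).
exists (k1 + k2)%N,
  (fun i => match fintype.split i with inl i => c * l1 i | inr i => (1 - c) * l2 i end),
  (fun i => match fintype.split i with inl i => p1 i | inr i => p2 i end).
split; [|split; [|split]].
- move=> i; case: (fintype.split i) => j; apply: mulr_ge0 => //; rewrite subr_ge0 //.
- rewrite big_split_ord /=. under eq_bigr do rewrite hl. under [X in _ + X]eq_bigr do rewrite hr.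
  by rewrite -!mulr_sumr l1s l2s !mulr1 addrC subrK.
- by move=> i; case: (fintype.split i).
- rewrite big_split_ord /=. under [X in _ = X + _]eq_bigr do rewrite hl. under [X in _ = _ + X]eq_bigr do rewrite hr.
  rewrite !scaler_sumr; congr (_ + _); apply: eq_bigr => i _; by rewrite scalerA.
Qed.

Lemma smooth_poly (R : realType) (p : {poly R}) (f : R -> R) :
  (forall t, f t = p.[t]) -> smooth_m11 f.
Proof.
move=> hf k t _.
have -> : f = horner p by apply/funext => s; rewrite hf.
have -> : derive1n k (horner p) = horner (p^`(k)).
  elim: k => [|k ih]; first by rewrite derive1n0 derivn0.
  by rewrite derive1nS ih derivnS derivE.
exact: derivable_horner.
Qed.
Lemma cube_inj (R : realType) (s t : R) : s ^+ 3 = t ^+ 3 -> s = t.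
Proof.
move=> h.
have e : (s - t) * (s^+2 + s * t + t^+2) = 0 by rewrite -[LHS]subr0 -(subrr (t^+3)) -{1}h; ring.
move/eqP: e; rewrite mulf_eq0 => /orP[/eqP|/eqP e]; first by move/eqP; rewrite subr_eq0 => /eqP.
have h1 : (s + t/2)^+2 + 3/4 * t^+2 = 0 by rewrite -e; field.
have sq := sqr_ge0 (s + t/2). have sq2 := sqr_ge0 t. have : t = 0 by nra.
move=> t0; move: h1; rewrite t0; nra.
Qed.

Lemma sum_delta (R : realType) k (V : lmodType R) (a : 'I_k) (F : 'I_k -> V) :
  \sum_i (i == a)%:R *: F i = F a.
Proof.
rewrite (bigD1 a) //= eqxx scale1r big1 ?addr0 // => i /negbTE ->; by rewrite scale0r.
Qed.

Lemma sum_delta1 (R : realType) k (a : 'I_k) : \sum_i ((i == a)%:R : R) = 1.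
Proof.
rewrite (bigD1 a) //= eqxx big1 ?addr0 // => i /negbTE ->; by [].
Qed.

Lemma affhull2 (R : realType) m (T : set 'rV[R]_m) p q mu :
  T p -> T q -> affhull T (mu *: p + (1 - mu) *: q).
Proof.
move=> Tp Tq; exists 2%N, (fun i : 'I_2 => if i == ord0 then mu else 1 - mu),
  (fun i : 'I_2 => if i == ord0 then p else q).
split; [|split].
- by rewrite !big_ord_recl big_ord0 /= addr0 addrC subrK.
- by move=> i; case: (i == ord0).
- by rewrite !big_ord_recl big_ord0 /= addr0.
Qed.

Lemma coord_le_sum (R : realType) m (u : 'rV[R]_m) j : `|u 0 j| <= \sum_k `|u 0 k|.
Proof.
rewrite (bigD1 j) //= lerDl; apply: sumr_ge0 => k _; exact: normr_ge0.
Qed.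

Lemma polytest (R : realType) (b : bool) (t : R) :
  (((1 - 'X^2 * (2^-1)%:P) * (b%:R)%:P) : {poly R}).[t] = (1 - t^+2/2) *+ b.
Proof. rewrite !hornerE. case: b; rewrite /= ?mulr1 ?mulr0 //. Qed.

Theorem lemma4p3 (R : realType) (n m : nat) (T : set 'rV[R]_m) :
  (2 <= n)%N -> (n <= m)%N ->
  is_simplex n T -> T `<=` crosspolytope m -> relint T 0 ->
  exists (A : R -> 'M[R]_m) (b : R -> 'rV[R]_m),
    (forall i j, smooth_m11 (fun t => A t i j)) /\
    (forall j, smooth_m11 (fun t => b t 0 j)) /\
    (forall s t, in_m11 s -> in_m11 t ->
       (forall x, T x -> affmap (A s) (b s) x = affmap (A t) (b t) x) -> s = t) /\
    (forall t, in_m11 t -> forall x, T x -> crosspolytope m (affmap (A t) (b t) x)) /\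
    (forall x, T x -> affmap (A 0) (b 0) x = x) /\
    (forall t, in_m11 t -> relint (affmap (A t) (b t) @` T) 0).
Proof.
move=> n2 nm [v [vind hT]] Tsub [T0 [e [e0 He]]].
have vT : forall i, T (v i).
  move=> i; rewrite hT; exists 1%N, (fun _ => 1), (fun _ => v i).
  split; [by []|split; [by rewrite big_ord1|split; [by exists i|]]].
  by rewrite big_ord1 scale1r.
have [u [uT u0]] : exists u, T u /\ u != 0.
  have [h|h] := boolP (v ord0 == 0); last by exists (v ord0).
  exists (v (inord 1)); split => //; apply/negP => /eqP h1.
  have ne : (ord0 : 'I_n.+1) != inord 1.
    by apply/negP => /eqP/(congr1 val); rewrite /= inordK //; lia.
  have := vind (fun i => (i == ord0)%:R - (i == inord 1)%:R).
  have -> : \sum_(i < n.+1) ((i == ord0)%:R - (i == inord 1)%:R : R) = 0.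
    by rewrite sumrB !sum_delta1 subrr.
  have -> : \sum_(i < n.+1) ((i == ord0)%:R - (i == inord 1)%:R : R) *: v i = 0.
    under eq_bigr do rewrite scalerBl.
    by rewrite sumrB !sum_delta (eqP h) h1 subrr.
  move=> /(_ erefl erefl ord0); rewrite eqxx (negbTE ne) subr0 => /eqP; by rewrite oner_eq0.
pose M := \sum_k `|u 0 k|.
have M0 : 0 <= M by apply: sumr_ge0 => k _; exact: normr_ge0.
pose lam := e / (4 * (M + 1)).
have lam0 : 0 < lam by rewrite /lam divr_gt0 //; lra.
have lamM : lam * M < e / 2.
  rewrite /lam. rewrite -mulrA [X in _ * X < _]mulrC mulrA ltr_pdivrMr; last lra.
  nra.
pose w := lam *: u.
have w0 : w != 0 by rewrite /w scaler_eq0 negb_or u0 andbT gt_eqF.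
have wb : forall j, `|w 0 j| < e / 2.
  move=> j; rewrite /w mxE normrM (gtr0_norm lam0).
  apply: le_lt_trans lamM; apply: ler_wpM2l; [exact: ltW|exact: coord_le_sum].
have wT : forall s, `|s| <= 1 -> T (s *: w).
  move=> s s1; apply: He.
  - move=> j; rewrite [(s *: w) 0 j]mxE [(0 : 'rV_m) 0 j]mxE subr0 normrM; have := wb j; have := normr_ge0 (w 0 j); have := normr_ge0 s; nra.
  - have -> : s *: w = (s * lam) *: u + (1 - s * lam) *: 0 by rewrite scaler0 addr0 scalerA.
    exact: affhull2.
pose a := fun t : R => 1 - t ^+ 2 / 2.
clearbody w.
pose be := fun t : R => t ^+ 3 / 2.
have gE : forall t x, affmap ((a t)%:M) (be t *: w) x = a t *: x + be t *: w.
  by move=> t x; rewrite /affmap mul_mx_scalar.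
exists (fun t => (a t)%:M), (fun t => be t *: w).
split; [|split; [|split; [|split; [|split]]]].
- move=> i j; apply: (@smooth_poly _ ((1 - 'X^2 * (2^-1)%:P) * ((i == j)%:R)%:P)) => t.
  by rewrite mxE polytest.
- move=> j; apply: (@smooth_poly _ ('X^3 * (w 0 j / 2)%:P)) => t.
  rewrite mxE !hornerE /be /=; by rewrite mulrAC.
- move=> s t _ _ /(_ 0 T0); rewrite !gE !scaler0 !add0r => /eqP.
  rewrite -subr_eq0 -scalerBl scaler_eq0 (negbTE w0) orbF subr_eq0 => /eqP h.
  apply: cube_inj; rewrite /be in h; lra.
- move=> t [t1 t2] x Tx; rewrite gE.
  have -> : be t *: w = (1 - a t) *: (t *: w) by rewrite scalerA /a /be; congr (_ *: _); ring.
  apply: conv_convex; [exact: Tsub|apply: Tsub; apply: wT; rewrite ler_norml; lra| |].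
  + rewrite /a; have := sqr_ge0 t; nra.
  + rewrite /a; nra.
- by move=> x _; rewrite gE /a /be !expr0n /= !mul0r scale0r addr0 subr0 scale1r.
- move=> t [t1 t2].
  have a1 : 1/2 < a t by rewrite /a; nra.
  have ben : `|be t| < 1/2.
    have ht : `|t| < 1 by rewrite ltr_norml; lra.
    have h3 : `|t| ^+ 3 < 1 by rewrite expr_lt1.
    rewrite /be normrM normrX normfV (ger0_norm (_ : (0:R) <= 2)) //; lra.
  split.
  + exists ((- (be t / a t)) *: w).
    * apply: He.
      - move=> j; rewrite !mxE subr0 normrM normrN normrM.
        have hb : `|be t / a t| <= 1.
          rewrite normrM normfV ler_pdivrMr; last by rewrite normr_gt0; apply/eqP; lra.
          rewrite mul1r (gtr0_norm (_ : 0 < a t)); lra.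
        have := wb j; have := normr_ge0 (w 0 j); rewrite -normrM; nra.
      - have -> : (- (be t / a t)) *: w = (- (be t / a t)) *: w + (1 - (- (be t / a t))) *: 0.
          by rewrite scaler0 addr0.
        apply: affhull2 => //; rewrite -[w]scale1r; apply: wT; by rewrite normr1.
    * rewrite gE scalerA mulrN mulrC -mulrA mulVf ?mulr1 ?scaleNr ?addNr //.
      apply/eqP; lra.
  + exists (e / 4); split; first lra.
    move=> y yb [k [l [p [ls [pS ey]]]]].
    have : forall i, exists x, T x /\ affmap (a t)%:M (be t *: w) x = p i.
      by move=> i; case: (pS i) => x Tx hx; exists x.
    move=> /choice [f hf].
    pose z := \sum_(i < k) l i *: f i.
    have yz : \sum_(i < k) l i *: p i = a t *: z + be t *: w.
      under eq_bigr => i _ do rewrite -(proj2 (hf i)) gE scalerDr.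
      rewrite big_split /=; congr (_ + _).
        by rewrite /z scaler_sumr; apply: eq_bigr => i _; rewrite !scalerA mulrC.
      by rewrite -scaler_suml ls scale1r.
    rewrite ey yz; exists z => //.
    apply: He; last by exists k, l, f; split => //; split => // i; exact: (proj1 (hf i)).
    move=> j; rewrite mxE subr0.
    have := yb j; rewrite ey yz !mxE subr0 => hy.
    have hw := wb j.
    have hn : `|a t * z 0 j| < e / 2.
      have -> : a t * z 0 j = (a t * z 0 j + be t * w 0 j) - be t * w 0 j by ring.
      apply: (le_lt_trans (ler_normB _ _)); rewrite normrM.
      have := normr_ge0 (w 0 j); have := normr_ge0 (be t); nra.
    move: hn; rewrite normrM (gtr0_norm (_ : 0 < a t)); last lra.
    have := normr_ge0 (z 0 j); nra.
Qed.
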